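(* Let $n \geq 2$. (1) If $a(n-1) <_4 a(n+1)$ and $a(n) \leq_4 a(n+2)$, then $S(n) = \frac{a(n)a(n+1)}{4}$. (2) If $a(n-1) >_4 a(n+1)$ and $a(n) \geq_4 a(n+2)$, then $S(n) = \frac{a(n)a(n+1)}{4} + \frac12$. (3) If $a(n-1) <_4 a(n+1)$ and $a(n) >_4 a(n+2)$, then $S(n) = \frac{a(n)(a(n+1)-1)}{4}$. (4) If $a(n-1) >_4 a(n+1)$ and $a(n) <_4 a(n+2)$, then $S(n) = \frac{(a(n)+1)a(n+1)}{4}$.
   Context: $(a(n))_{n\geq0}$ is the increasing sequence (indexed from $0$, so $a(0)=1,a(1)=2,a(2)=4,a(3)=7,\ldots$) of odious numbers, i.e. nonnegative integers whose sum of binary digits is odd, and $S(n) = \sum_{k=0}^n a(k)$. For integers $x, y$, let $\bar x, \bar y \in \{0,1,2,3\}$ be their residues modulo $4$; write $x <_4 y$ if $\bar x < \bar y$, $x \leq_4 y$ if $\bar x \leq \bar y$, and $x >_4 y$ (resp. $x \geq_4 y$) if $y <_4 x$ (resp. $y \leq_4 x$). *)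

(* Defs.v *)
From mathcomp Require Import all_boot all_order all_algebra.
Set Implicit Arguments. Unset Strict Implicit. Unset Printing Implicit Defensive.

Fixpoint bitsum_aux (fuel n : nat) : nat :=
  match fuel with
  | 0 => 0
  | f.+1 => if n is 0 then 0 else odd n + bitsum_aux f n./2
  end.
Definition bitsum (n : nat) : nat := bitsum_aux n n.

Definition odious (n : nat) : bool := odd (bitsum n).

(* The list [filter odious (iota 0 (4*n+4))] enumerates the odious numbers
   below 4n+4 in increasing order; it contains at least 2n+2 > n elements
   (exactly one of 2m, 2m+1 is odious), so its n-th entry is a(n). *)
Definition a (n : nat) : nat := nth 0 (filter odious (iota 0 (4 * n + 4))) n.

Definition S (n : nat) : nat := \sum_(0 <= k < n.+1) a k.

Definition lt4 (x y : nat) : bool := x %% 4 < y %% 4.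
Definition le4 (x y : nat) : bool := x %% 4 <= y %% 4.

Example a_check : [seq a i | i <- iota 0 8] = [:: 1; 2; 4; 7; 8; 11; 13; 14].
Proof. by []. Qed.

(* Main.v *)
Require Import Defs.
From mathcomp Require Import all_boot all_order all_algebra.
From mathcomp Require Import zify ring lra.
Import GRing.Theory Num.Theory.

Lemma unf f n : bitsum_aux f.+1 n.+1 = (odd n.+1 + bitsum_aux f (n.+1)./2)%N.
Proof. by []. Qed.

Lemma bitsum_auxS f n : (n <= f)%N -> bitsum_aux f.+1 n = bitsum_aux f n.
Proof.
elim: f n => [|f IH] [|n] // hn.
rewrite !unf IH // -divn2. lia.
Qed.

Lemma bitsum_fuel f n : (n <= f)%N -> bitsum_aux f n = bitsum n.
Proof.
elim: f => [|f IH] hn.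
  by have -> : n = 0%N by lia.
case: (ltngtP n f.+1) hn => // [h|->] _; last by [].
by rewrite bitsum_auxS ?IH //; lia.
Qed.

Lemma bitsum_double k : bitsum (2 * k) = bitsum k.
Proof.
case: k => [|k] //. rewrite /bitsum.
have -> : (2 * k.+1 = (2*k+1).+1)%N by lia.
rewrite unf -divn2.
have -> : (2*k+1).+1 = (2*(k+1))%N by lia.
rewrite oddM /=.
have -> : ((2 * (k + 1)) %/ 2 = k.+1)%N by lia.
by rewrite add0n bitsum_fuel //; lia.
Qed.

Lemma bitsum_doubleS k : bitsum (2 * k + 1) = (bitsum k).+1.
Proof.
rewrite /bitsum. have -> : (2 * k + 1 = (2*k).+1)%N by lia.
rewrite unf -divn2.
have -> : ((2 * k).+1 %/ 2 = k)%N by lia.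
rewrite -addn1 oddD oddM /= bitsum_fuel //; lia.
Qed.

Lemma odious_double k : odious (2*k) = odious k.
Proof. by rewrite /odious bitsum_double. Qed.
Lemma odious_doubleS k : odious (2*k+1) = ~~ odious k.
Proof. by rewrite /odious bitsum_doubleS. Qed.

Lemma filter_odious N : filter odious (iota 0 (2*N)) =
  map (fun k => 2*k + ~~ odious k)%N (iota 0 N).
Proof.
elim: N => [|N IH] //.
have -> : (2 * N.+1 = 2*N + 2)%N by lia.
rewrite iotaD filter_cat IH -[N.+1]addn1 iotaD map_cat /= add0n.
congr (_ ++ _).
have -> : (2*N).+1 = (2*N+1)%N by lia.
rewrite /= odious_double odious_doubleS.
by case: (odious N) => /=; rewrite ?addn0 ?addn1.
Qed.

Lemma aE k : a k = (2*k + ~~ odious k)%N.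
Proof.
rewrite /a. have -> : (4 * k + 4 = 2 * (2*k+2))%N by lia.
rewrite filter_odious (nth_map 0%N) ?size_iota ?nth_iota //; lia.
Qed.

Lemma aE2 k : a (2*k) = (4*k + ~~ odious k)%N.
Proof. rewrite aE odious_double; lia. Qed.
Lemma aE2S k : a (2*k+1) = (4*k + 2 + odious k)%N.
Proof. rewrite aE odious_doubleS negbK; lia. Qed.

Lemma S_succ n : S n.+1 = (S n + a n.+1)%N.
Proof. by rewrite /S big_nat_recr. Qed.

Lemma SE k : S (2*k+1) = (4*k*k + 7*k + 3)%N.
Proof.
elim: k => [|k IH]. by rewrite /S !big_nat_recr //= big_geq.
have -> : (2 * k.+1 + 1 = (2*k+1).+2)%N by lia.
rewrite !S_succ IH.
have -> : (2*k+1).+2 = (2*(k+1)+1)%N by lia.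
have -> : (2*k+1).+1 = (2*(k+1))%N by lia.
rewrite aE2 aE2S. case: (odious (k+1)) => /=; lia.
Qed.

Local Open Scope ring_scope.

Lemma H1 (s x y : nat) : (4*s = x*y)%N -> (s%:R : rat) = x%:R * y%:R / 4.
Proof. move/(congr1 (fun z => z%:R : rat)); rewrite !natrM => h; nra. Qed.
Lemma H2 (s x y : nat) : (4*s = x*y + 2)%N -> (s%:R : rat) = x%:R * y%:R / 4 + 1/2.
Proof. move/(congr1 (fun z => z%:R : rat)); rewrite !natrD !natrM => h; nra. Qed.
Lemma H3 (s x y : nat) : (4*s + x = x*y)%N -> (s%:R : rat) = x%:R * (y%:R - 1) / 4.
Proof. move/(congr1 (fun z => z%:R : rat)); rewrite !natrD !natrM => h; nra. Qed.
Lemma H4 (s x y : nat) : (4*s = (x+1)*y)%N -> (s%:R : rat) = (x%:R + 1) * y%:R / 4.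
Proof. move/(congr1 (fun z => z%:R : rat)); rewrite !natrD !natrM => h; nra. Qed.

Lemma key (s A0 A1 A2 A3 : nat) :
  (lt4 A0 A2 -> le4 A1 A3 -> 4*s = A1*A2)%N /\
  (lt4 A2 A0 -> le4 A3 A1 -> 4*s = A1*A2+2)%N /\
  (lt4 A0 A2 -> lt4 A3 A1 -> 4*s + A1 = A1*A2)%N /\
  (lt4 A2 A0 -> lt4 A1 A3 -> 4*s = (A1+1)*A2)%N ->
  ((lt4 A0 A2 -> le4 A1 A3 ->
     (s)%:R = ((A1)%:R * (A2)%:R / 4 : rat)) /\
  (lt4 A2 A0 -> le4 A3 A1 ->
     (s)%:R = ((A1)%:R * (A2)%:R / 4 + 1 / 2 : rat)) /\
  (lt4 A0 A2 -> lt4 A3 A1 ->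
     (s)%:R = ((A1)%:R * ((A2)%:R - 1) / 4 : rat)) /\
  (lt4 A2 A0 -> lt4 A1 A3 ->
     (s)%:R = (((A1)%:R + 1) * (A2)%:R / 4 : rat))).
Proof.
case=> [h1 [h2 [h3 h4]]]; split; [|split; [|split]] => p q.
- exact: H1 (h1 p q).
- exact: H2 (h2 p q).
- exact: H3 (h3 p q).
- exact: H4 (h4 p q).
Qed.

Theorem theorem3 (n : nat) (hn : (2 <= n)%N) :
  (lt4 (a n.-1) (a n.+1) -> le4 (a n) (a n.+2) ->
     (S n)%:R = ((a n)%:R * (a n.+1)%:R / 4 : rat)) /\
  (lt4 (a n.+1) (a n.-1) -> le4 (a n.+2) (a n) ->
     (S n)%:R = ((a n)%:R * (a n.+1)%:R / 4 + 1 / 2 : rat)) /\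
  (lt4 (a n.-1) (a n.+1) -> lt4 (a n.+2) (a n) ->
     (S n)%:R = ((a n)%:R * ((a n.+1)%:R - 1) / 4 : rat)) /\
  (lt4 (a n.+1) (a n.-1) -> lt4 (a n) (a n.+2) ->
     (S n)%:R = (((a n)%:R + 1) * (a n.+1)%:R / 4 : rat)).
Proof.
apply: key; rewrite /lt4 /le4.
have [k [-> | ->]] : exists k, (n = 2*k+2 \/ n = 2*k+3)%N.
  exists ((n - 2) %/ 2)%N; lia.
- have e0 : a (2*k+2).-1 = (4*k+2+odious k)%N.
    have -> : (2*k+2).-1 = (2*k+1)%N by lia. by rewrite aE2S.
  have e1 : a (2*k+2) = (4*(k+1) + ~~odious (k+1))%N.
    have -> : (2*k+2 = 2*(k+1))%N by lia. by rewrite aE2.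
  have e2 : a (2*k+2).+1 = (4*(k+1) + 2 + odious (k+1))%N.
    have -> : (2*k+2).+1 = (2*(k+1)+1)%N by lia. by rewrite aE2S.
  have e3 : a (2*k+2).+2 = (4*(k+2) + ~~odious (k+2))%N.
    have -> : (2*k+2).+2 = (2*(k+2))%N by lia. by rewrite aE2.
  have eS : (S (2*k+2) + a (2*k+2).+1 = 4*(k+1)*(k+1) + 7*(k+1) + 3)%N.
    by rewrite -S_succ -SE; congr S; lia.
  rewrite e2 in eS.
  rewrite e0 e1 e2 e3.
  move: eS; case: (odious k); case: (odious (k+1)); case: (odious (k+2)) => /= eS;
  (split; [|split; [|split]]) => p q; nia.
- have e0 : a (2*k+3).-1 = (4*(k+1)+~~odious (k+1))%N.
    have -> : (2*k+3).-1 = (2*(k+1))%N by lia. by rewrite aE2.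
  have e1 : a (2*k+3) = (4*(k+1) + 2 + odious (k+1))%N.
    have -> : (2*k+3 = 2*(k+1)+1)%N by lia. by rewrite aE2S.
  have e2 : a (2*k+3).+1 = (4*(k+2) + ~~odious (k+2))%N.
    have -> : (2*k+3).+1 = (2*(k+2))%N by lia. by rewrite aE2.
  have e3 : a (2*k+3).+2 = (4*(k+2) + 2 + odious (k+2))%N.
    have -> : (2*k+3).+2 = (2*(k+2)+1)%N by lia. by rewrite aE2S.
  have eS : (S (2*k+3) = 4*(k+1)*(k+1) + 7*(k+1) + 3)%N.
    by rewrite -SE; congr S; lia.
  rewrite e0 e1 e2 e3 eS.
  case: (odious (k+1)); case: (odious (k+2)) => /=;
  (split; [|split; [|split]]) => p q; nia.
Qed.
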